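(* Let $q$ be a prime power and $k\ge3$, $h\ge2$ integers, and $1\le u_0<u_1\le\dots\le u_h$ integers. Let $U_0,U_1,\dots,U_h$ be subspaces of $\mathbf F_q^k$ of dimensions $u_0,u_1,\dots,u_h$ with $U_i\cap U_j=U_0$ for all distinct $i,j\in\{1,\dots,h\}$, and assume $q^k-q^{k-1}>q^{u_0}-1+\sum_{i=1}^h(q^{u_i}-q^{u_0})$. Let $U$ be the set of nonzero vectors of $\mathbf F_q^k$ not in $U_1\cup\dots\cup U_h$, let $\widetilde G$ be a matrix whose columns consist of exactly one representative of each class $\{\lambda\mathbf v:\lambda\in\mathbf F_q^*\}$, $\mathbf v\in U$, and let $\mathbf C$ be the linear code with generator matrix $\widetilde G$. Then $\mathbf C$ is a linear $\big[\frac{(q^k-q^{u_0})-\sum_{i=1}^h(q^{u_i}-q^{u_0})}{q-1},\,k,\,d\big]_q$ code with $d\ge q^{k-1}-\sum_{i=1}^hq^{u_i-1}$. *)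

(* Defs.v *)
From HB Require Import structures.
From mathcomp Require Import all_boot all_order all_algebra.
Set Implicit Arguments. Unset Strict Implicit. Unset Printing Implicit Defensive.
Import Order.TTheory GRing.Theory Num.Theory.
Local Open Scope ring_scope.

Definition in_U (F : finFieldType) (k h : nat) (Us : nat -> {vspace 'cV[F]_k})
  (v : 'cV[F]_k) : bool :=
  (v != 0) && ~~ has (fun i => v \in Us i) (iota 1 h).

Definition same_class (F : finFieldType) (k : nat) (v w : 'cV[F]_k) : Prop :=
  exists a : F, a != 0 /\ w = a *: v.

Definition proj_rep_matrix (F : finFieldType) (k h n : nat)
  (Us : nat -> {vspace 'cV[F]_k}) (G : 'M[F]_(k, n)) : Prop :=
  [/\ (forall j : 'I_n, in_U h Us (col j G)),
      (forall j1 j2 : 'I_n, j1 != j2 -> ~ same_class (col j1 G) (col j2 G)) &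
      (forall v, in_U h Us v -> exists j : 'I_n, same_class v (col j G))].

Definition wt (F : finFieldType) (n : nat) (c : 'rV[F]_n) : nat :=
  #|[set j : 'I_n | c 0 j != 0]|.

(* Main.v *)
Require Import Defs.
From HB Require Import structures.
From mathcomp Require Import all_boot all_order all_algebra finfield.
Import Order.TTheory GRing.Theory Num.Theory.
Local Open Scope ring_scope.
From mathcomp Require Import zify.
Lemma mx11_eq0 (F : finFieldType) (M : 'M[F]_1) : (M == 0) = (M 0 0 == 0).
Proof.
apply/eqP/eqP => [-> | H]; first by rewrite mxE.
by apply/matrixP => i j; rewrite !ord1 H mxE.
Qed.

Lemma mulG_entry (F : finFieldType) k n (x : 'rV[F]_k) (G : 'M[F]_(k, n)) j :
  (x *m G) 0 j = (x *m col j G) 0 0.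
Proof. rewrite colE mulmxA -colE. by rewrite !mxE. Qed.

Lemma cardV (F : finFieldType) k (V : {vspace 'cV[F]_k}) :
  #|[set v | v \in V]| = (#|F| ^ \dim V)%N.
Proof. by rewrite cardsE card_vspace. Qed.

Lemma exists_nz (F : finFieldType) k (x : 'rV[F]_k) : x != 0 ->
  exists v : 'cV[F]_k, x *m v != 0.
Proof.
move=> xn0; have [v Hv|H] := pickP (fun v : 'cV[F]_k => x *m v != 0); first by exists v.
move/eqP: xn0 => [] /=; apply/rowP => j; have := H (delta_mx j 0).
rewrite -colE => /negbFE /eqP /matrixP /(_ 0 0).
by rewrite !mxE.
Qed.

Lemma ker_dim (F : finFieldType) k (x : 'rV[F]_k) : x != 0 ->
  exists K : {vspace 'cV[F]_k},
    (forall v, (v \in K) = (x *m v == 0)) /\ \dim K = k.-1.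
Proof.
move=> xn0; pose f := linfun (mulmx x : 'cV[F]_k -> 'M[F]_1).
exists (lker f); split; first by move=> v; rewrite memv_ker lfunE.
have := limg_ker_dim f fullv; rewrite capfv dimvf dim_matrix => Hd.
have : \dim (f @: fullv) = 1%N.
  apply/eqP; rewrite eqn_leq; apply/andP; split.
    by have := dimvS (subvf (f @: fullv)); rewrite dimvf dim_matrix.
  rewrite lt0n dimv_eq0; have [v Hv] := exists_nz _ _ _ xn0.
  apply: contra Hv => /eqP H0; have := memv_img f (memvf v).
  by rewrite H0 memv0 lfunE.
move=> H1; move: Hd; rewrite H1 mulr1 addn1.
by move/(congr1 predn).
Qed.
Lemma in_UZ (F : finFieldType) k h (Us : nat -> {vspace 'cV[F]_k}) a v :
  a != 0 -> in_U h Us (a *: v) = in_U h Us v.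
Proof.
move=> an0; rewrite /in_U scaler_eq0 (negbTE an0) /=; congr (_ && ~~ _).
by apply: eq_has => i /=; rewrite rpredZeq (negbTE an0).
Qed.

Lemma count_cols (F : finFieldType) k h (Us : nat -> {vspace 'cV[F]_k}) n
  (G : 'M[F]_(k, n)) (P : pred 'cV[F]_k) :
  proj_rep_matrix h Us G -> (forall a v, a != 0 -> P (a *: v) = P v) ->
  #|[set v | in_U h Us v && P v]| = (#|[set j | P (col j G)]| * (#|F| - 1))%N.
Proof.
case=> HU Hd Hc HP.
pose D := setX [set j | P (col j G)] [set a : F | a != 0].
pose f := fun p : 'I_n * F => p.2 *: col p.1 G.
have -> : [set v | in_U h Us v && P v] = f @: D.
  apply/setP => v; rewrite inE; apply/andP/imsetP.
    case=> Uv Pv; have [j [a [an0 Ha]]] := Hc v Uv.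
    exists (j, a^-1); first by rewrite !inE /= Ha HP // invr_eq0 an0 andbT.
    by rewrite /f /= Ha scalerA mulVf ?scale1r.
  case=> [[j a]]; rewrite !inE /= => /andP [Pj an0] ->; rewrite /f /=.
  by rewrite in_UZ // HP // HU.
rewrite card_in_imset ?cardsX.
  congr (_ * _)%N; rewrite subn1 -(cardsC1 (0 : F)); apply: eq_card => a; by rewrite !inE.
move=> [j1 a1] [j2 a2]; rewrite !inE /= /f /= => /andP [_ a1n0] /andP [_ a2n0] E.
have cn0 : forall j, col j G != 0 by move=> j; have := HU j; case/andP.
have ej : j1 = j2.
  apply/eqP; apply: contraT => ne; case: (Hd _ _ ne); exists (a2^-1 * a1).
  split; first by rewrite mulf_neq0 ?invr_eq0.
  by rewrite -scalerA E scalerA mulVf ?scale1r.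
subst j2; congr (_, _); apply/eqP; rewrite -subr_eq0.
move/eqP: E; rewrite -subr_eq0 -scalerBl scaler_eq0 (negbTE (cn0 j1)) orbF.
by [].
Qed.
Definition Bs (F : finFieldType) k (Us : nat -> {vspace 'cV[F]_k}) m :=
  [set v | has (fun i => v \in Us i) (iota 1 m)].
Arguments Bs {F k} Us m.

Lemma Bs_succ (F : finFieldType) k (Us : nat -> {vspace 'cV[F]_k}) m :
  Bs Us m.+1 = Bs Us m :|: [set v | v \in Us m.+1].
Proof.
apply/setP => v; rewrite !inE -[m.+1]addn1 iotaD has_cat /= orbF.
by rewrite add1n addn1.
Qed.

Lemma sub0 (F : finFieldType) k h (Us : nat -> {vspace 'cV[F]_k}) :
  (2 <= h)%N ->
  (forall i j, (1 <= i <= h)%N -> (1 <= j <= h)%N -> i != j ->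
     (Us i :&: Us j)%VS = Us 0%N) ->
  forall i, (1 <= i <= h)%N -> (Us 0%N <= Us i)%VS.
Proof.
move=> h2 Hc i Hi.
have [j Hj nij] : exists2 j, (1 <= j <= h)%N & i != j.
  case: (eqVneq i 1%N) => [->|ne]; [exists 2%N | exists 1%N] => //.
  by rewrite andTb (leq_trans _ h2).
by rewrite -(Hc i j Hi Hj nij) capvSl.
Qed.
Arguments sub0 {F k h Us}.

Lemma union_card (R : pzRingType) (F : finFieldType) k h (u : nat -> nat)
  (Us : nat -> {vspace 'cV[F]_k}) :
  (2 <= h)%N ->
  (forall i, (i <= h)%N -> \dim (Us i) = u i) ->
  (forall i j, (1 <= i <= h)%N -> (1 <= j <= h)%N -> i != j ->
     (Us i :&: Us j)%VS = Us 0%N) ->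
  forall m, (1 <= m <= h)%N ->
  (#|Bs Us m|%:R : R) = #|F|%:R ^+ u 0%N +
     \sum_(1 <= i < m.+1) (#|F|%:R ^+ u i - #|F|%:R ^+ u 0%N).
Proof.
move=> h2 Hdim Hc; elim=> [//|m IH] /andP [_ Hm].
have cU : forall i, (i <= h)%N -> #|[set v | v \in Us i]| = (#|F| ^ u i)%N.
  by move=> i hi; rewrite cardsE card_vspace Hdim.
case: (posnP m) => [m0|mpos].
  subst m; rewrite big_nat1 addrC subrK.
  have -> : Bs Us 1 = [set v | v \in Us 1%N].
    by apply/setP => v; rewrite !inE /= orbF.
  by rewrite cU ?natrX // (leq_trans _ h2).
rewrite Bs_succ big_nat_recr //=.
have Hcap : Bs Us m :&: [set v | v \in Us m.+1] = [set v | v \in Us 0%N].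
  apply/setP => v; rewrite !inE; apply/andP/idP.
    case=> /hasP [i]; rewrite mem_iota add1n => /andP [i1 im] vi vm.
    rewrite -(Hc i m.+1) ?memv_cap ?vi ?vm ?i1 ?Hm ?(ltn_eqF im) //=.
    by rewrite (leq_trans (ltnW im)).
  move=> v0; split.
    apply/hasP; exists 1%N; first by rewrite mem_iota leqnn add1n ltnS.
    by apply: (subvP (sub0 h2 Hc 1%N _)) => //; rewrite (leq_trans _ h2).
  by apply: (subvP (sub0 h2 Hc m.+1 _)) => //; rewrite Hm.
have := cardsUI (Bs Us m) [set v | v \in Us m.+1].
rewrite Hcap !cU ?(ltnW Hm) // => /(congr1 (fun x => x%:R : R)).
rewrite !natrD IH; last by rewrite mpos ltnW.
rewrite !natrX => E.
apply: (addIr (#|F|%:R ^+ u 0%N : R)); rewrite E.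
by rewrite !addrA subrK.
Qed.

Lemma union_le (F : finFieldType) k (Us : nat -> {vspace 'cV[F]_k}) (S : {set 'cV[F]_k}) m :
  (#|S :&: Bs Us m| <= \sum_(1 <= i < m.+1) #|S :&: [set v | v \in Us i]|)%N.
Proof.
elim: m => [|m IH].
  rewrite big_geq // leqn0 cards_eq0; apply/eqP; apply/setP => v; by rewrite !inE /= andbF.
rewrite Bs_succ setIUr big_nat_recr //=.
by apply: leq_trans (leq_card_setU _ _) _; rewrite leq_add2r.
Qed.

Theorem theorem3p1 (F : finFieldType) (k h : nat) (u : nat -> nat)
  (Us : nat -> {vspace 'cV[F]_k}) (n : nat) (G : 'M[F]_(k, n)) :
  (3 <= k)%N -> (2 <= h)%N ->
  (1 <= u 0%N)%N -> (u 0%N < u 1%N)%N ->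
  (forall i, (1 <= i < h)%N -> (u i <= u i.+1)%N) ->
  (forall i, (i <= h)%N -> \dim (Us i) = u i) ->
  (forall i j, (1 <= i <= h)%N -> (1 <= j <= h)%N -> i != j ->
     (Us i :&: Us j)%VS = Us 0%N) ->
  ((#|F|%:Z ^+ k - #|F|%:Z ^+ k.-1) >
     (#|F|%:Z ^+ u 0%N - 1) +
     \sum_(1 <= i < h.+1) (#|F|%:Z ^+ u i - #|F|%:Z ^+ u 0%N))%R ->
  proj_rep_matrix h Us G ->
  [/\ (n%:R : rat) =
        ((#|F|%:R ^+ k - #|F|%:R ^+ u 0%N)
         - \sum_(1 <= i < h.+1) (#|F|%:R ^+ u i - #|F|%:R ^+ u 0%N))
        / (#|F|%:R - 1),
      \rank G = k &
      forall x : 'rV[F]_k, x *m G != 0 ->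
        (#|F|%:Z ^+ k.-1 - \sum_(1 <= i < h.+1) #|F|%:Z ^+ (u i).-1
           <= (wt (x *m G))%:Z)%R].
Proof.
move=> k3 h2 u01 u0lt _ Hdim Hc Hineq HG.
have q1 : (1 < #|F|)%N := finNzRing_gt1 F.
have h1 : (1 <= h <= h)%N by rewrite leqnn (leq_trans _ h2).
have AC : [set v | in_U h Us v] = ~: Bs Us h.
  apply/setP => v; rewrite !inE /in_U; case: eqP => //= ->.
  apply/esym/negbF/hasP; exists 1%N; first by rewrite mem_iota leqnn add1n ltnS (leq_trans _ h2).
  exact: mem0v.
have cardT : #|[set: 'cV[F]_k]| = (#|F| ^ k)%N.
  by rewrite cardsT card_mx muln1.
have cardA : (#|[set v | in_U h Us v]| + #|Bs Us h|)%N = (#|F| ^ k)%N.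
  by rewrite AC addnC cardsC card_mx muln1.
have cardAn : #|[set v | in_U h Us v]| = (n * (#|F| - 1))%N.
  have := @count_cols F k h Us n G predT HG (fun _ _ _ => erefl).
  have -> : [set v | in_U h Us v && predT v] = [set v | in_U h Us v].
    by apply/setP => v; rewrite !inE andbT.
  move=> ->; congr (_ * _)%N.
  by rewrite -[RHS]card_ord; apply: eq_card => j; rewrite inE.
have key : forall x : 'rV[F]_k, x != 0 ->
   (#|[set j | x *m col j G != 0%R]| * (#|F| - 1) +
    #|[set v | x *m v != 0%R] :&: Bs Us h| + #|F| ^ k.-1 = #|F| ^ k)%N.
  move=> x xn0; have [K [HK dK]] := ker_dim _ _ _ xn0.
  have HP : forall a (v : 'cV[F]_k), a != 0 -> (x *m (a *: v) != 0) = (x *m v != 0).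
    by move=> a v an0; rewrite -scalemxAr scaler_eq0 (negbTE an0).
  rewrite -(@count_cols F k h Us n G (fun v => x *m v != 0) HG HP).
  have -> : [set v | in_U h Us v && (x *m v != 0)] = [set v | x *m v != 0] :\: Bs Us h.
    by apply/setP => v; move/setP: AC => /(_ v); rewrite !inE => ->; rewrite andbC.
  rewrite [X in (X + _)%N]addnC cardsID.
  have -> : [set v | x *m v != 0] = ~: [set v | v \in K].
    by apply/setP => v; rewrite !inE HK.
  by rewrite -dK -cardV addnC cardsC card_mx muln1.
split.
- have E1 := @union_card rat F k h u Us h2 Hdim Hc h h1.
  have qn1 : (#|F|%:R - 1 : rat) != 0.
    by rewrite subr_eq0 pnatr_eq1 gtn_eqF.
  apply: (mulIf qn1); rewrite divfK //.
  move/(congr1 (fun m => m%:R : rat)): cardA; rewrite cardAn natrD natrM natrB ?(ltnW q1) //.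
  rewrite natrX E1 => E.
  rewrite (_ : n%:R * (#|F|%:R - 1) = #|F|%:R ^+ k - (#|F|%:R ^+ u 0%N +
     \sum_(1 <= i < h.+1) (#|F|%:R ^+ u i - #|F|%:R ^+ u 0%N))).
    by rewrite opprD addrA.
  by rewrite -E addrK.
- apply/eqP; apply: contraT => rk.
  have : kermx G != 0.
    rewrite -mxrank_eq0 mxrank_ker subn_eq0 -ltnNge.
    by rewrite ltn_neqAle rank_leq_row andbT.
  have [i Hi|H0] := pickP (fun i => row i (kermx G) != 0); last first.
    by move=> /eqP []; apply/row_matrixP => i; rewrite row0; apply/eqP; have := H0 i => /negbFE.
  move=> _; set x := row i (kermx G).
  have xG : x *m G = 0 by rewrite /x -row_mul mulmx_ker row0.
  have := key x Hi.
  have -> : [set j | x *m col j G != 0] = set0.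
    by apply/setP => j; rewrite !inE colE mulmxA xG mul0mx eqxx.
  rewrite cards0 mul0n add0n => E.
  have B0 : (0 : 'cV[F]_k) \in Bs Us h.
    rewrite inE; apply/hasP; exists 1%N; last exact: mem0v.
    by rewrite mem_iota leqnn add1n ltnS (leq_trans _ h2).
  have Hle : (#|[set v | x *m v != 0%R] :&: Bs Us h| < #|Bs Us h|)%N.
    apply: proper_card; rewrite properEneq subsetIr andbT.
    apply/eqP => Heq; move: B0; rewrite -Heq !inE mulmx0 eqxx.
    by [].
  have E1 := @union_card int F k h u Us h2 Hdim Hc h h1.
  move: E1 Hineq; rewrite !natz => E1.
  rewrite addrAC -E1.
  move/(congr1 Posz): E; rewrite PoszD -!natz !natrX !natz.
  move: Hle; set c := #|_ :&: _|; set b := #|Bs Us h|; set P := (_ ^+ k)%R; set Q := (_ ^+ k.-1)%R. move=> Hle E2 H3. lia.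
- move=> x xG.
  have xn0 : x != 0 by apply: contraNneq xG => ->; rewrite mul0mx.
  have [K [HK dK]] := ker_dim _ _ _ xn0.
  have Ekey := key x xn0.
  have wtE : wt (x *m G) = #|[set j | x *m col j G != 0%R]|.
    by rewrite /wt; apply: eq_card => j; rewrite !inE mulG_entry mx11_eq0.
  have Hi : forall i, (1 <= i < h.+1)%N ->
      (#|[set v | x *m v != 0%R] :&: [set v | v \in Us i]| <=
       #|F| ^ (u i).-1 * (#|F| - 1))%N.
    move=> i /andP [i1 ih]; rewrite ltnS in ih.
    have ih' : (1 <= i <= h)%N by rewrite i1 ih.
    have ui : (1 <= u i)%N.
      apply: leq_trans u01 _; rewrite -!Hdim //.
      exact: dimvS (sub0 h2 Hc i ih').
    have cd : ((u i).-1 <= \dim (Us i :&: K))%N.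
      have := dimv_sum_cap (Us i) K; have := dimvS (subvf (Us i + K)%VS).
      rewrite dimvf dim_matrix mulr1 Hdim // dK; lia.
    have := cardsID [set v | x *m v != 0%R] [set v | v \in Us i].
    have -> : [set v | v \in Us i] :\: [set v | x *m v != 0%R] =
              [set v | v \in (Us i :&: K)%VS].
      by apply/setP => v; rewrite !inE memv_cap HK negbK andbC.
    rewrite (cardV _ _ (Us i)) (cardV _ _ (Us i :&: K)%VS) Hdim // setIC.
    have := leq_pexp2l (ltnW q1) cd.
    rewrite mulnBr muln1 -expnSr prednK //.
    set c := #|_ :&: _|; set a := (#|F| ^ (u i).-1)%N; set b := (#|F| ^ _)%N.
    move=> Hab Hc'. lia.
  have Hn : (#|F| ^ k.-1 <= #|[set j | x *m col j G != 0%R]| +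
               \sum_(1 <= i < h.+1) #|F| ^ (u i).-1)%N.
    rewrite -(@leq_pmul2r (#|F| - 1)%N); last by rewrite subn_gt0.
    have Hs := union_le _ _ Us [set v | x *m v != 0%R] h.
    have Hs2 : (\sum_(1 <= i < h.+1) #|[set v | x *m v != 0%R] :&: [set v | v \in Us i]|
       <= \sum_(1 <= i < h.+1) #|F| ^ (u i).-1 * (#|F| - 1))%N.
      rewrite big_nat_cond [X in (_ <= X)%N]big_nat_cond.
      by apply: leq_sum => i /andP [Hr _]; apply: Hi.
    rewrite -big_distrl /= in Hs2.
    move: Ekey Hs Hs2; rewrite mulnDl.
    have -> : (#|F| ^ k = #|F| ^ k.-1 * (#|F| - 1) + #|F| ^ k.-1)%N.
      rewrite -[X in (_ = _ + X)%N](muln1 (#|F| ^ k.-1)%N) -mulnDr subnK ?(ltnW q1) //.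
      by rewrite -expnSr prednK // (leq_trans _ k3).
    set WA := (#|_| * _)%N; set c := #|_ :&: _|; set QA := (_ ^ k.-1 * _)%N.
    set S1 := (\sum_(_ <= _ < _) _)%N; set SA := (_ * _)%N.
    lia.
  rewrite wtE lerBlDr.
  have -> : (\sum_(1 <= i < h.+1) (Posz #|F|) ^+ (u i).-1) =
            Posz (\sum_(1 <= i < h.+1) #|F| ^ (u i).-1)%N.
    by rewrite -[RHS]natz natr_sum; apply: eq_bigr => i _; rewrite natrX natz.
  by rewrite -natz -natrX natz -PoszD lez_nat.
Qed.
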